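(* Let $n\ge r\ge1$, let $\mathcal{O}\subset\mathbb{R}^{n\times r}$ be open with ${\rm St}(n,r)\subset\mathcal{O}$, let $f:\mathcal{O}\to\mathbb{R}$ be continuously differentiable, and consider (P): $\min_{X\in\mathcal{S}_{+}^{n,r}}f(X)$. Suppose that every global (respectively, local) minimizer of (P) has no zero rows when $n>r>1$, and that for every global (respectively, local) minimizer $X^*$ of (P) there exist $\delta'>0$ and $L'>0$ such that for all $X\in{\rm St}(n,r)$ with $\|X-X^*\|_F\le\delta'$ and all $\overline{X}\in{\rm Proj}_{\mathcal{S}_{+}^{n,r}}(X)$, $f(X)-f(\overline{X})\ge-L'\|X-\overline{X}\|_F^2$. Then for every global (respectively, local) minimizer $X^*$ of (P): 1. if $n=r$ or $n>r=1$, with $\kappa'>0$ a constant such that ${\rm dist}(Z,\mathcal{S}_{+}^{n,r})\le\kappa'{\rm dist}(Z,\mathbb{R}_{+}^{n\times r})$ for all $Z\in{\rm St}(n,r)$, there exists $\delta>0$ such that for all $X\in{\rm St}(n,r)$ with $\|X-X^*\|_F\le\delta$, $f(X)-f(X^* )+(\kappa')^2L'\|\max(0,-X)\|_F^2\ge0$; 2. if $n>r>1$, with $\kappa:=\frac{2.1\sqrt{r}[1+3r(n-r)]}{X^*_{i^*j^*}}$ ($X^*_{i^*j^*}$ the smallest nonzero entry of $X^*$), there exists $\delta>0$ such that for all $\epsilon\ge0$ and all $X\in\mathcal{G}_\epsilon:=\{X\in{\rm St}(n,r):\|\max(0,-X)\|_F^2=\epsilon\}$ with $\|X-X^*\|_F\le\delta$,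 $f(X)-f(X^* )+\kappa^2L'\|\max(0,-X)\|_F^2\ge0$. Consequently, there exists $\widehat{\rho}>0$ such that for every $\rho\ge\widehat{\rho}$ the problem $\min_{X\in{\rm St}(n,r)}\{f(X)+\rho\|\max(0,-X)\|_F^2\}$ has the same set of global optimal solutions as (P).
   Context: ${\rm St}(n,r):=\{X\in\mathbb{R}^{n\times r}: X^\top X=I_r\}$, $\mathbb{R}_{+}^{n\times r}$ the entrywise nonnegative matrices, $\mathcal{S}_{+}^{n,r}:=\mathbb{R}_{+}^{n\times r}\cap{\rm St}(n,r)$, ${\rm dist}$ the Frobenius-norm distance, ${\rm Proj}_\Omega(X)$ the set of nearest points of $\Omega$ to $X$; $\max(0,-X)$ is taken entrywise. *)

(* Defs.v *)
From HB Require Import structures.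
From mathcomp Require Import all_boot all_order all_algebra.
From mathcomp Require Import all_classical all_reals.
Set Implicit Arguments. Unset Strict Implicit. Unset Printing Implicit Defensive.
Import Order.TTheory GRing.Theory Num.Theory.
Local Open Scope ring_scope.
Local Open Scope classical_set_scope.

Section Defs.
Variable R : realType.
Variables n r : nat.
Local Notation M := 'M[R]_(n, r).

Definition fnorm (X : M) : R := Num.sqrt (\sum_i \sum_j (X i j) ^+ 2).
Definition frob_inner (X Y : M) : R := \sum_i \sum_j X i j * Y i j.

Definition stiefel : set M := [set X | X^T *m X = 1%:M].
Definition nonneg_mx : set M := [set X | forall i j, 0 <= X i j].
Definition stiefel_nonneg : set M := nonneg_mx `&` stiefel.

Definition negpart (X : M) : M := map_mx (fun x => Num.max 0 (- x)) X.

Definition mdist (Z : M) (S : set M) : R := inf [set fnorm (Z - W) | W in S].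

Definition proj (S : set M) (X : M) : set M :=
  [set Y | S Y /\ forall W, S W -> fnorm (X - Y) <= fnorm (X - W)].

Definition open_fro (O : set M) : Prop :=
  forall X, O X -> exists2 e : R, 0 < e & forall Y, fnorm (Y - X) < e -> O Y.

Definition C1_on (O : set M) (f : M -> R) : Prop :=
  exists G : M -> M,
    (forall X, O X -> forall e : R, 0 < e -> exists2 d : R, 0 < d &
       forall H, fnorm H < d ->
         `|f (X + H) - f X - frob_inner (G X) H| <= e * fnorm H) /\
    (forall X, O X -> forall e : R, 0 < e -> exists2 d : R, 0 < d &
       forall Y, O Y -> fnorm (Y - X) < d -> fnorm (G Y - G X) < e).

Definition is_gmin (S : set M) (g : M -> R) (X : M) : Prop :=
  S X /\ forall Y, S Y -> g X <= g Y.
Definition is_lmin (S : set M) (g : M -> R) (X : M) : Prop :=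
  S X /\ exists2 e : R, 0 < e & forall Y, S Y -> fnorm (Y - X) < e -> g X <= g Y.
Definition is_min (glob : bool) (S : set M) (g : M -> R) (X : M) : Prop :=
  if glob then is_gmin S g X else is_lmin S g X.

Definition no_zero_rows (X : M) : Prop := forall i, exists j, X i j != 0.

Definition is_min_nz_entry (X : M) (m : R) : Prop :=
  (exists i j, X i j = m) /\ m != 0 /\ (forall i j, X i j != 0 -> m <= X i j).

Definition lip_cond (f : M -> R) (Xs : M) (dl L : R) : Prop :=
  forall X, stiefel X -> fnorm (X - Xs) <= dl ->
  forall Xb, proj stiefel_nonneg X Xb -> f X - f Xb >= - (L * fnorm (X - Xb) ^+ 2).

Definition level_set (eps : R) : set M :=
  [set X | stiefel X /\ fnorm (negpart X) ^+ 2 = eps].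

End Defs.

(* Main.v *)
Require Import Defs.
From HB Require Import structures.
From mathcomp Require Import all_boot all_order all_algebra.
From mathcomp Require Import all_classical all_reals.
From mathcomp Require topology normedtype sequences.
From mathcomp.algebra_tactics Require Import ring lra.
Import Order.TTheory GRing.Theory Num.Theory.
Local Open Scope ring_scope.
Local Open Scope classical_set_scope.

Set Implicit Arguments. Unset Strict Implicit. Unset Printing Implicit Defensive.

Section Basic.
Variables (R : realType) (n r : nat).
Local Notation M := 'M[R]_(n, r).
Implicit Types X Y Z W : M.

Definition ssq (X : M) : R := \sum_i \sum_j X i j ^+ 2.

Lemma sum2_ler (F G : 'I_n -> 'I_r -> R) :
  (forall i j, F i j <= G i j) -> \sum_i \sum_j F i j <= \sum_i \sum_j G i j.
Proof. by move=> h; apply: ler_sum => i _; apply: ler_sum => j _. Qed.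

Lemma sum2D (F G : 'I_n -> 'I_r -> R) :
  \sum_i \sum_j (F i j + G i j) = \sum_i \sum_j F i j + \sum_i \sum_j G i j.
Proof. by rewrite -big_split; apply: eq_bigr => i _; rewrite big_split. Qed.

Lemma sum2Z (c : R) (F : 'I_n -> 'I_r -> R) :
  \sum_i \sum_j (c * F i j) = c * \sum_i \sum_j F i j.
Proof. by rewrite mulr_sumr; apply: eq_bigr => i _; rewrite mulr_sumr. Qed.

Lemma sum2_ge0 (F : 'I_n -> 'I_r -> R) :
  (forall i j, 0 <= F i j) -> 0 <= \sum_i \sum_j F i j.
Proof. by move=> h; apply: sumr_ge0 => i _; apply: sumr_ge0 => j _. Qed.



Lemma sum2_entry (F : 'I_n -> 'I_r -> R) i j :
  (forall i j, 0 <= F i j) -> F i j <= \sum_i \sum_j F i j.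
Proof.
move=> h0; rewrite (bigD1 i) //= (bigD1 j) //=.
have h1 : 0 <= \sum_(j0 | j0 != j) F i j0 by apply: sumr_ge0.
have h2 : 0 <= \sum_(i0 | i0 != i) \sum_j F i0 j.
  by apply: sumr_ge0 => k _; apply: sumr_ge0.
lra.
Qed.

Lemma sum2_eq0 (F : 'I_n -> 'I_r -> R) :
  (forall i j, 0 <= F i j) -> \sum_i \sum_j F i j = 0 -> forall i j, F i j = 0.
Proof.
move=> h0 h i j; apply/eqP; rewrite eq_le h0 andbT -h; exact: sum2_entry.
Qed.

Lemma ssq_ge0 X : 0 <= ssq X.
Proof. by apply: sum2_ge0 => i j; exact: sqr_ge0. Qed.

Lemma fnorm_ge0 X : 0 <= fnorm X.
Proof. exact: sqrtr_ge0. Qed.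

Lemma fnorm_sqr X : fnorm X ^+ 2 = ssq X.
Proof. exact: (sqr_sqrtr (ssq_ge0 X)). Qed.

Lemma entry_sqr_le X i j : X i j ^+ 2 <= ssq X.
Proof. by apply: sum2_entry => ? ?; exact: sqr_ge0. Qed.

Lemma entry_le X i j : `|X i j| <= fnorm X.
Proof. by rewrite -sqrtr_sqr ler_sqrt ?ssq_ge0 // entry_sqr_le. Qed.

Lemma fnorm_le_ssq X e : 0 <= e -> ssq X <= e ^+ 2 -> fnorm X <= e.
Proof.
by move=> e0 h; rewrite -(ger0_norm e0) -sqrtr_sqr ler_sqrt ?sqr_ge0.
Qed.

Lemma fnorm_lt_ssq X e : 0 < e -> ssq X < e ^+ 2 -> fnorm X < e.
Proof.
move=> e0 h; rewrite -(gtr0_norm e0) -sqrtr_sqr ltr_sqrt //.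
by rewrite exprn_gt0.
Qed.

Lemma ssq_entry_bound X e : (forall i j, `|X i j| <= e) -> ssq X <= (n * r)%:R * e ^+ 2.
Proof.
move=> h; apply: le_trans (_ : _ <= \sum_(i : 'I_n) \sum_(j : 'I_r) e ^+ 2) _.
  apply: sum2_ler => i j; have := h i j; rewrite ler_norml => /andP [h1 h2]; nra.
rewrite !sumr_const !card_ord -mulrnA mulr_natl mulnC.
by [].
Qed.

Lemma fnormN X : fnorm (- X) = fnorm X.
Proof.
rewrite /fnorm; congr Num.sqrt; apply: eq_bigr => i _; apply: eq_bigr => j _.
by rewrite mxE sqrrN.
Qed.

Lemma fnormB X Y : fnorm (X - Y) = fnorm (Y - X).
Proof. by rewrite -opprB fnormN. Qed.

Lemma ssq0_entries X : ssq X = 0 -> forall i j, X i j = 0.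
Proof.
move=> h i j; apply/eqP; rewrite -sqrf_eq0; apply/eqP.
exact: (@sum2_eq0 (fun i j => X i j ^+ 2) (fun i j => sqr_ge0 (X i j)) h i j).
Qed.

Lemma cs X Y : frob_inner X Y <= fnorm X * fnorm Y.
Proof.
have [a0|apos] := eqVneq (fnorm X) 0.
  have hX : forall i j, X i j = 0.
    by apply: ssq0_entries; rewrite -fnorm_sqr a0 expr0n.
  rewrite a0 mul0r /frob_inner big1 // => i _; rewrite big1 // => j _.
  by rewrite hX mul0r.
have [b0|bpos] := eqVneq (fnorm Y) 0.
  have hY : forall i j, Y i j = 0.
    by apply: ssq0_entries; rewrite -fnorm_sqr b0 expr0n.
  rewrite b0 mulr0 /frob_inner big1 // => i _; rewrite big1 // => j _.
  by rewrite hY mulr0.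
set a := fnorm X in apos *; set b := fnorm Y in bpos *.
have a0 : 0 < a by rewrite lt_def apos fnorm_ge0.
have b0 : 0 < b by rewrite lt_def bpos fnorm_ge0.
have h : (2 * a * b) * frob_inner X Y <= b ^+ 2 * ssq X + a ^+ 2 * ssq Y.
  rewrite /frob_inner /ssq -!sum2Z -sum2D; apply: sum2_ler => i j.
  have := sqr_ge0 (b * X i j - a * Y i j); nra.
have hX : ssq X = a ^+ 2 by rewrite fnorm_sqr.
have hY : ssq Y = b ^+ 2 by rewrite fnorm_sqr.
rewrite hX hY in h.
have hab : 0 < a * b by exact: mulr_gt0.
nra.
Qed.

Lemma ssqD X Y : ssq (X + Y) = ssq X + 2 * frob_inner X Y + ssq Y.
Proof.
rewrite /ssq /frob_inner -sum2Z -!sum2D; apply: eq_bigr => i _; apply: eq_bigr => j _.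
rewrite mxE; ring.
Qed.

Lemma fnorm_triangle X Y : fnorm (X + Y) <= fnorm X + fnorm Y.
Proof.
apply: fnorm_le_ssq; first by apply: addr_ge0; exact: fnorm_ge0.
rewrite ssqD -!fnorm_sqr; have := cs X Y; nra.
Qed.

Lemma fnorm_tri3 X Y Z : fnorm (X - Z) <= fnorm (X - Y) + fnorm (Y - Z).
Proof.
have -> : X - Z = (X - Y) + (Y - Z) by rewrite addrA subrK.
exact: fnorm_triangle.
Qed.

End Basic.
Module Topo.
Import topology normedtype sequences.
Import numFieldNormedType.Exports.
Lemma mxvecE' (T : Type) m n (A : 'M[T]_(m,n)) i j : mxvec A ord0 (mxvec_index i j) = A i j.
Proof. exact: mxvecE. Qed.

Lemma cluster_box (R : realType) n r (u : nat -> 'M[R]_(n,r)) :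
 (forall k i j, `|u k i j| <= 1) ->
 exists Y : 'M[R]_(n,r), (forall i j, `|Y i j| <= 1) /\
   forall e, 0 < e -> forall N, exists2 k, (N <= k)%N & forall i j, `|u k i j - Y i j| < e.
Proof.
move=> ub.
pose A := [set v : 'rV[R]_(n*r) | forall i, `[-1, 1]%classic (v ord0 i)].
have cA : compact A by exact: (@rV_compact R (n*r) (fun=> `[-1, 1]%classic) (fun=> @segment_compact R (-1) 1)).
pose F := ((fun k => mxvec (u k)) @ \oo).
have FA : F A.
  apply: (@filterE nat) => k /= i; case/mxvec_indexP: i => a b. rewrite /= mxvecE'.
  by rewrite /= in_itv /= -ler_norml ub.
have [v [Av clv]] := cA F _ FA.
exists (vec_mx v); split.
  move=> i j; have := Av (mxvec_index i j).
  by rewrite /= in_itv /= -ler_norml /vec_mx mxE.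
move=> e e0 N.
have := clv [set w | exists2 k, (N <= k)%N & w = mxvec (u k)] (ball v e).
case.
- exists N => // k /= Nk; by exists k.
- exact: nbhsx_ballx.
move=> w [[k Nk ->]] [_ bk]; exists k => // i j.
have := bk ord0 (mxvec_index i j).
by rewrite /ball /= mxvecE' /vec_mx mxE distrC.
Qed.

End Topo.

Lemma ltr_absP (R : realType) (x e : R) : `|x| < e -> - e < x /\ x < e.
Proof. by rewrite ltr_norml => /andP. Qed.
Lemma ler_absP (R : realType) (x e : R) : `|x| <= e -> - e <= x /\ x <= e.
Proof. by rewrite ler_norml => /andP. Qed.
Lemma abs_bounds (R : realType) (x : R) : - `|x| <= x /\ x <= `|x|.
Proof. by apply: ler_absP. Qed.

Section Stief.
Variables (R : realType) (n r : nat).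
Local Notation M := 'M[R]_(n, r).
Implicit Types X Y Z W : M.

Lemma stiefelE X : stiefel X <-> forall j k, \sum_i X i j * X i k = (j == k)%:R.
Proof.
split.
  move=> h j k; have := congr1 (fun A : 'M[R]_r => A j k) h; rewrite /= !mxE => <-.
  by apply: eq_bigr => i _; rewrite mxE.
move=> h; apply/matrixP => j k; rewrite !mxE -h.
by apply: eq_bigr => i _; rewrite mxE.
Qed.

Lemma stiefel_col X j : stiefel X -> \sum_i X i j ^+ 2 = 1.
Proof. by move/stiefelE/(_ j j); rewrite eqxx. Qed.

Lemma stiefel_bound X i j : stiefel X -> `|X i j| <= 1.
Proof.
move=> hX; have h := @stiefel_col X j hX.
have : X i j ^+ 2 <= 1.
  rewrite -h (bigD1 i) //=; rewrite lerDl; apply: sumr_ge0 => ? _; exact: sqr_ge0.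
move=> hh; rewrite ler_norml; apply/andP; split; nra.
Qed.

Definition approx (S : set M) Y := forall e, 0 < e -> exists W, S W /\ fnorm (W - Y) < e.

Lemma small_zero (t C : R) : 0 <= C -> (forall e, 0 < e -> `|t| <= C * e) -> t = 0.
Proof.
move=> C0 h; apply/eqP; apply: contraT => tn0.
have t0 : 0 < `|t| by rewrite normr_gt0.
have e0 : 0 < `|t| / (2 * (C + 1)) by apply: divr_gt0 => //; lra.
have hC : 0 < 2 * (C + 1) by lra.
have := h _ e0; rewrite mulrA ler_pdivlMr // => hh.
nra.
Qed.

Lemma approx_nonneg Y : approx (@nonneg_mx R n r) Y -> nonneg_mx Y.
Proof.
move=> h i j; apply/ler_addgt0Pr => e e0.
have [W [WS hW]] := h e e0.
have := le_lt_trans (entry_le (W - Y) i j) hW; rewrite !mxE => /ltr_absP [h1 h2].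
have := WS i j. lra.
Qed.

Lemma approx_bound S Y : (forall W, S W -> forall i j, `|W i j| <= 1) ->
  approx S Y -> forall i j, `|Y i j| <= 2.
Proof.
move=> hb h i j; have [W [WS hW]] := h 1 ltr01.
have := le_lt_trans (entry_le (W - Y) i j) hW; rewrite !mxE => /ltr_absP [h1 h2].
have /ler_absP [h3 h4] := hb W WS i j.
rewrite ler_norml; apply/andP; split; lra.
Qed.

Lemma approx_stiefel Y : approx (@stiefel R n r) Y -> stiefel Y.
Proof.
move=> h; have hb := approx_bound (fun W hW i j => stiefel_bound i j hW) h.
apply/stiefelE => j k; apply/eqP; rewrite -subr_eq0; apply/eqP.
apply: (@small_zero _ (3 * n%:R)); first by rewrite mulr_ge0 ?ler0n.
move=> e e0; have [W [WS hW]] := h e e0.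
have := (stiefelE W).1 WS j k => <-.
rewrite -sumrB; apply: le_trans (ler_norm_sum _ _ _) _.
apply: le_trans (_ : _ <= \sum_(i : 'I_n) 3 * e) _; last first.
  by rewrite sumr_const card_ord -mulr_natl; lra.
apply: ler_sum => i _.
have := le_lt_trans (entry_le (W - Y) i j) hW; rewrite !mxE => /ltr_absP [h1 h2].
have := le_lt_trans (entry_le (W - Y) i k) hW; rewrite !mxE => /ltr_absP [h3 h4].
have /ler_absP [h5 h6] := stiefel_bound i k WS.
have /ler_absP [h7 h8] := hb i j.
have -> : Y i j * Y i k - W i j * W i k = Y i j * (Y i k - W i k) + (Y i j - W i j) * W i k by ring.
rewrite ler_norml; apply/andP; split; nra.
Qed.

Lemma cluster_fn (S : set M) (u : nat -> M) : (forall k, S (u k)) ->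
  (forall W, S W -> forall i j, `|W i j| <= 1) ->
  exists Y, forall e, 0 < e -> forall N, exists2 k, (N <= k)%N & fnorm (u k - Y) < e.
Proof.
move=> hS hb.
have [Y [_ hY]] := @Topo.cluster_box R n r u (fun k => hb _ (hS k)).
exists Y => e e0 N.
set K : R := (n * r)%:R.
have K0 : 0 <= K by rewrite ler0n.
have e'0 : 0 < e / (K + 1) by apply: divr_gt0 => //; lra.
have [k Nk hk] := hY _ e'0 N; exists k => //.
apply: fnorm_lt_ssq => //.
apply: le_lt_trans (ssq_entry_bound (e := e / (K + 1)) _) _.
  by move=> i j; rewrite !mxE; exact/ltW/hk.
rewrite -/K.
have he : e / (K + 1) * (K + 1) = e by rewrite mulfVK //; apply/lt0r_neq0; lra.
set t := e / (K + 1) in e'0 he *.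
rewrite -he; nra.
Qed.

Lemma cluster_approx (S : set M) (u : nat -> M) Y : (forall k, S (u k)) ->
  (forall e, 0 < e -> forall N, exists2 k, (N <= k)%N & fnorm (u k - Y) < e) ->
  approx S Y.
Proof. by move=> hS hY e e0; have [k _ hk] := hY e e0 0%N; exists (u k). Qed.

Lemma stiefel_nonneg_bound W : stiefel_nonneg W -> forall i j, `|W i j| <= 1.
Proof. by move=> [_ h] i j; apply: stiefel_bound. Qed.

Lemma approx_stiefel_nonneg Y : approx (@stiefel_nonneg R n r) Y -> stiefel_nonneg Y.
Proof.
move=> h; split.
  by apply: approx_nonneg => e e0; have [W [[W1 W2] hW]] := h e e0; exists W.
by apply: approx_stiefel => e e0; have [W [[W1 W2] hW]] := h e e0; exists W.
Qed.

Definition contS (S : set M) (g : M -> R) := forall Y, S Y -> forall e, 0 < e ->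
  exists2 d, 0 < d & forall Z, fnorm (Z - Y) < d -> `|g Z - g Y| < e.

Lemma inv_small (e : R) : 0 < e -> exists N : nat, forall k, (N <= k)%N -> (k.+1%:R)^-1 < e.
Proof.
move=> e0; exists (Num.Def.archi_bound (e^-1)) => k hk.
have ei : 0 < e^-1 by rewrite invr_gt0.
have h1 := archi_boundP (ltW ei).
have h2 : ((Num.Def.archi_bound e^-1)%:R : R) <= k%:R by rewrite ler_nat.
have h3 : e^-1 < k.+1%:R by rewrite -addn1 natrD; lra.
rewrite -(invrK e) ltf_pV2 // posrE ?invr_gt0 // ltr0n //.
Qed.

Lemma evt (g : M -> R) : (exists Z, stiefel_nonneg Z) -> contS (@stiefel_nonneg R n r) g ->
  exists Z0, stiefel_nonneg Z0 /\ forall Z, stiefel_nonneg Z -> g Z0 <= g Z.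
Proof.
move=> [Z1 hZ1] gc.
have lb : exists B, forall Z, stiefel_nonneg Z -> B <= g Z.
  apply: contrapT => hn.
  have hk : forall k : nat, exists Z, stiefel_nonneg Z /\ g Z < - k%:R.
    move=> k; apply: contrapT => hk'; apply: hn; exists (- k%:R) => Z hZ.
    rewrite leNgt; apply/negP => hlt; apply: hk'; by exists Z.
  case: (choice hk) => u hu.
  have [Y hY] := cluster_fn (fun k => (hu k).1) stiefel_nonneg_bound.
  have YS := approx_stiefel_nonneg (cluster_approx (fun k => (hu k).1) hY).
  have [d d0 hd] := gc Y YS 1 ltr01.
  have hN := archi_boundP (addr_ge0 (normr_ge0 (g Y)) ler01).
  have [k Nk hkk] := hY d d0 (Num.Def.archi_bound (`|g Y| + 1)).
  have /ltr_absP [h1 h2] := hd _ hkk.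
  have h3 := (hu k).2.
  have h4 : ((Num.Def.archi_bound (`|g Y| + 1))%:R : R) <= k%:R by rewrite ler_nat.
  have [h5 _] := abs_bounds (g Y).
  lra.
have [B hB] := lb.
set E := [set g Z | Z in @stiefel_nonneg R n r].
have hinf : has_inf E.
  split; first by exists (g Z1), Z1.
  by exists B => _ [Z hZ <-]; apply: hB.
have hk : forall k : nat, exists Z, stiefel_nonneg Z /\ g Z < inf E + (k.+1%:R)^-1.
  move=> k; have hk0 : 0 < (k.+1%:R : R)^-1 by rewrite invr_gt0 ltr0Sn.
  have [_ [Z hZ <-] hlt] := inf_adherent hk0 hinf.
  by exists Z.
case: (choice hk) => u hu.
have [Y hY] := cluster_fn (fun k => (hu k).1) stiefel_nonneg_bound.
have YS := approx_stiefel_nonneg (cluster_approx (fun k => (hu k).1) hY).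
exists Y; split => // Z hZ.
apply: le_trans (_ : g Y <= inf E) _; last first.
  by apply: ge_inf; [exact: hinf.2 | exists Z].
apply/ler_addgt0Pr => e e0.
have e2 : 0 < e / 2 by lra.
have [d d0 hd] := gc Y YS _ e2.
have [N hN] := inv_small e2.
have [k Nk hkk] := hY d d0 N.
have /ltr_absP [h1 h2] := hd _ hkk.
have h3 := (hu k).2.
have h4 := hN k Nk.
move: h3 h4; set q := k.+1%:R^-1 => h3 h4; lra.
Qed.

Lemma stiefel_nonneg_ex : (r <= n)%N -> exists Z, @stiefel_nonneg R n r Z.
Proof.
move=> rn; exists (\matrix_(i, j) ((i : nat) == j)%:R); split.
  by move=> i j; rewrite mxE ler0n.
apply/stiefelE => j k.
rewrite (bigD1 (widen_ord rn j)) //= big1 ?addr0.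
  by rewrite !mxE /= eqxx mul1r.
move=> i hi; rewrite !mxE.
have -> : ((i : nat) == j) = false.
  apply/negP => /eqP hij; move/negP: hi; apply; apply/eqP; apply: val_inj => /=.
  exact: hij.
by rewrite mul0r.
Qed.

Lemma proj_exists X : (r <= n)%N -> exists Xb, Defs.proj (@stiefel_nonneg R n r) X Xb.
Proof.
move=> rn.
have hc : contS (@stiefel_nonneg R n r) (fun W => fnorm (X - W)).
  move=> Y _ e e0; exists e => // Z hZ.
  have h1 := fnorm_tri3 X Y Z.
  have h2 := fnorm_tri3 X Z Y.
  rewrite [fnorm (Y - Z)]fnormB in h1.
  rewrite ltr_norml; apply/andP; split; lra.
have [Z0 [hZ0 hmin]] := @evt (fun W => fnorm (X - W)) (stiefel_nonneg_ex rn) hc.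
by exists Z0; split.
Qed.

Lemma mdist_le (S : set M) Z W : S W -> Defs.mdist Z S <= fnorm (Z - W).
Proof.
move=> hW; apply: ge_inf; last by exists W.
by exists 0 => _ [V _ <-]; exact: fnorm_ge0.
Qed.

Lemma proj_le_mdist (S : set M) Z Zb : Defs.proj S Z Zb -> fnorm (Z - Zb) <= Defs.mdist Z S.
Proof.
move=> [hZb hmin]; apply: lb_le_inf; first by exists (fnorm (Z - Zb)), Zb.
by move=> _ [V hV <-]; apply: hmin.
Qed.

Lemma innerN X Y : frob_inner X (- Y) = - frob_inner X Y.
Proof.
rewrite /frob_inner -sumrN; apply: eq_bigr => i _; rewrite -sumrN.
by apply: eq_bigr => j _; rewrite mxE mulrN.
Qed.

Lemma C1_cont (O : set M) f : C1_on O f -> forall Y, O Y -> forall e, 0 < e ->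
  exists2 d, 0 < d & forall Z, fnorm (Z - Y) < d -> `|f Z - f Y| < e.
Proof.
move=> [G [hd _]] Y OY e e0.
have [d1 d10 hd1] := hd Y OY 1 ltr01.
set c := fnorm (G Y) + 1.
have c0 : 0 < c by have := fnorm_ge0 (G Y); rewrite /c; lra.
exists (Num.min d1 (e / c)).
  by rewrite lt_min d10 divr_gt0.
move=> Z; rewrite lt_min => /andP [hZ1 hZ2].
have hZY : Y + (Z - Y) = Z by rewrite addrC subrK.
have := hd1 (Z - Y) hZ1; rewrite hZY mul1r => /ler_absP [h1 h2].
have h3 := cs (G Y) (Z - Y).
have h4 := cs (G Y) (- (Z - Y)); rewrite innerN fnormN in h4.
have h5 : fnorm (Z - Y) * c < e by rewrite -ltr_pdivlMr.
have h6 := fnorm_ge0 (Z - Y).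
have h7 := fnorm_ge0 (G Y).
rewrite ltr_norml; apply/andP; split; rewrite /c in h5; nra.
Qed.

End Stief.

Lemma qm_sum (R : realType) (I : finType) (x : I -> R) :
  (\sum_i x i) ^+ 2 <= #|I|%:R * \sum_i x i ^+ 2.
Proof.
have h : 2 * (\sum_i x i) ^+ 2 <= \sum_i \sum_j (x i ^+ 2 + x j ^+ 2).
  rewrite expr2 mulr_suml mulr_sumr; apply: ler_sum => i _.
  rewrite mulr_sumr mulr_sumr; apply: ler_sum => j _.
  have := sqr_ge0 (x i - x j); nra.
have e : \sum_i \sum_j (x i ^+ 2 + x j ^+ 2) = 2 * (#|I|%:R * \sum_i x i ^+ 2).
  under eq_bigr do rewrite big_split /= sumr_const.
  rewrite big_split /= sumr_const sumrMnl; ring.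
rewrite e in h; lra.
Qed.

Lemma neg_prod_le (R : realType) (x y : R) : `|x| <= 1 -> `|y| <= 1 ->
  - (x * y) <= Num.max 0 (- x) + Num.max 0 (- y).
Proof.
move=> /ler_absP [h1 h2] /ler_absP [h3 h4].
have p1 : 0 <= Num.max 0 (- x) by rewrite le_max lexx.
have p2 : - x <= Num.max 0 (- x) by rewrite le_max lexx orbT.
have q1 : 0 <= Num.max 0 (- y) by rewrite le_max lexx.
have q2 : - y <= Num.max 0 (- y) by rewrite le_max lexx orbT.
have [hx|hx] := leP 0 x; have [hy|hy] := leP 0 y; nra.
Qed.

Lemma alg_sq (R : realType) (u A B : R) : 0 <= u -> u <= 10 * (A + B) -> u ^+ 2 <= 200 * (A ^+ 2 + B ^+ 2).
Proof.
move=> h1 h2; have h3 : 0 <= 10 * (A + B) - u by lra.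
have h4 : 0 <= 10 * (A + B) + u by lra.
have := mulr_ge0 h3 h4; have := sqr_ge0 (A - B); nra.
Qed.
Lemma alg_final (R : realType) (x N T O K : R) : 0 <= x -> x <= 1 -> 0 <= N -> 0 <= O -> 0 <= K ->
  T <= O + N -> 81 * x * O <= 200 * K * N -> x * (N + T + O) <= (2 + 5 * K) * N.
Proof.
move=> h1 h2 h3 h4 h5 h6 h7.
have q1 : 0 <= x * (O + N - T) by apply: mulr_ge0; lra.
have q2 : 0 <= (1 - x) * N by apply: mulr_ge0; lra.
have q3 : 0 <= K * N by apply: mulr_ge0.
nra.
Qed.

Section EB.
Variables (R : realType) (n r : nat).
Local Notation M := 'M[R]_(n, r).
Variables (Xs : M) (c : 'I_n -> 'I_r) (m : R).
Hypotheses (hXs : stiefel_nonneg Xs) (m0 : 0 < m) (m1 : m <= 1)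
  (H2 : forall i j, Xs i j != 0 -> c i = j)
  (H3 : forall i j, Xs i j != 0 -> m <= Xs i j)
  (H1 : forall i k, k != c i -> Xs i (c i) != 0).
Variables (X : M) (hX : stiefel X) (hd : 10 * fnorm (X - Xs) <= m).

Definition Pm : M := \matrix_(i, j) Num.max 0 (X i j).
Local Notation N := (negpart X).

Lemma NE i j : N i j = Num.max 0 (- X i j).
Proof. by rewrite mxE. Qed.

Lemma ent i j : 10 * `|X i j - Xs i j| <= m.
Proof. have h : `|X i j - Xs i j| <= fnorm (X - Xs) by have := entry_le (X - Xs) i j; rewrite !mxE.
have hd0 := hd; lra. Qed.

Lemma PN i j : X i j = Pm i j - N i j /\ Pm i j * N i j = 0 /\ 0 <= Pm i j /\ 0 <= N i j.
Proof.
rewrite NE /Pm mxE; have [h|h] := leP 0 (X i j); have [h'|h'] := leP 0 (- X i j);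
  (split; [lra|split; [nra|split; lra]]).
Qed.

Lemma Xpos i j : Xs i j != 0 -> 9 * m <= 10 * X i j.
Proof.
move=> h; have := H3 h; have := ent i j; set t := `|_|; have [h1 h2] := abs_bounds (X i j - Xs i j).
rewrite -/t in h1 h2; lra.
Qed.

Lemma Pon i j : Xs i j != 0 -> Pm i j = X i j /\ N i j = 0.
Proof.
move=> h; have hp := Xpos h.
have hx : 0 <= X i j.
  move: m0 hp. lra.
rewrite NE /Pm mxE; have [h0|h0] := leP 0 (X i j); have [h'|h'] := leP 0 (- X i j);
  split; lra.
Qed.

Definition s j := \sum_i (if c i == j then Pm i j ^+ 2 else 0).
Definition offc j := \sum_i (if c i == j then 0 else Pm i j ^+ 2).

Lemma s_pos j : 0 < s j.
Proof.
have [i hi] : exists i, Xs i j != 0.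
  apply: contrapT => hn.
  have : \sum_i Xs i j ^+ 2 = 0.
    rewrite big1 // => i _; have : ~ (Xs i j != 0) by move=> h; apply: hn; exists i.
    by move/negP; rewrite negbK => /eqP ->; rewrite expr0n.
  by rewrite (stiefel_col j hXs.2) => /eqP; rewrite oner_eq0.
have ci := H2 hi; have [hp _] := Pon hi; have hx := Xpos hi.
rewrite /s (bigD1 i) //= ci eqxx hp.
have : 0 <= \sum_(i0 | i0 != i) (if c i0 == j then Pm i0 j ^+ 2 else 0).
  by apply: sumr_ge0 => k _; case: ifP => _ //; exact: sqr_ge0.
move=> hs; have m0x := m0; have hx0 : 0 < X i j by lra.
rewrite expr2; have := mulr_gt0 hx0 hx0; lra.
Qed.

Definition nu j := Num.sqrt (s j).

Lemma nu_pos j : 0 < nu j.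
Proof. by rewrite /nu sqrtr_gt0 s_pos. Qed.

Lemma nu_sqr j : nu j ^+ 2 = s j.
Proof. by rewrite /nu sqr_sqrtr // ltW // s_pos. Qed.

Definition Ym : M := \matrix_(i, j) if c i == j then Pm i j / nu j else 0.

Lemma YmE i j : Ym i j = if c i == j then Pm i j / nu j else 0.
Proof. by rewrite /Ym mxE. Qed.

Lemma subE (A B : M) i j : (A - B) i j = A i j - B i j.
Proof. by rewrite !mxE. Qed.

Lemma Y_S : stiefel_nonneg Ym.
Proof.
split.
  move=> i j; rewrite mxE; case: ifP => _ //.
  by apply: divr_ge0; [have [_ [_ []]] := PN i j | exact: ltW (nu_pos j)].
apply/stiefelE => j k; have [<-|jk] := eqVneq j k.
  rewrite ?eqxx.
  have -> : \sum_i Ym i j * Ym i j = s j / nu j ^+ 2.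
    rewrite /s mulr_suml; apply: eq_bigr => i _; rewrite !mxE.
    case: ifP => _; last by rewrite !mul0r.
    have := nu_pos j => h; field; exact: lt0r_neq0.
  rewrite nu_sqr divff //; exact: lt0r_neq0 (s_pos j).
rewrite big1 // => i _; rewrite !mxE.
case: (eqVneq (c i) j) => [cij|cij]; last by rewrite mul0r.
by rewrite cij (negbTE jk) mulr0.
Qed.

Lemma colX j : 1 = s j + offc j + \sum_i N i j ^+ 2.
Proof.
rewrite -(stiefel_col j hX) /s /offc -!big_split; apply: eq_bigr => i _ /=.
have [e1 [e2 [e3 e4]]] := PN i j.
rewrite e1; case: ifP => _; nra.
Qed.

Lemma termeq i j : (X - Ym) i j ^+ 2 = N i j ^+ 2 +
  (if c i == j then Pm i j ^+ 2 * (1 - (nu j)^-1) ^+ 2 else Pm i j ^+ 2).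
Proof.
have [e1 [e2 [e3 e4]]] := PN i j.
rewrite subE YmE; case: ifP => _.
  move: e1 e2; generalize (nu j)^-1 => v -> h.
  have -> : (Pm i j - N i j - Pm i j * v) ^+ 2 = N i j ^+ 2 + Pm i j ^+ 2 * (1 - v) ^+ 2 + 2 * (Pm i j * N i j) * (v - 1) by ring.
  by rewrite h; ring.
move: e1 e2 => -> h.
have -> : (Pm i j - N i j - 0) ^+ 2 = N i j ^+ 2 + Pm i j ^+ 2 - 2 * (Pm i j * N i j) by ring.
by rewrite h; ring.
Qed.


Definition T1 := \sum_i \sum_j (if c i == j then Pm i j ^+ 2 * (1 - (nu j)^-1) ^+ 2 else 0).
Definition Off := \sum_i \sum_j (if c i == j then 0 else Pm i j ^+ 2).

Lemma ssqXY : ssq (X - Ym) = ssq N + T1 + Off.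
Proof.
rewrite /ssq /T1 /Off -!sum2D; apply: eq_bigr => i _; apply: eq_bigr => j _.
rewrite termeq; case: ifP => _; ring.
Qed.

Lemma T1_le : T1 <= Off + ssq N.
Proof.
have -> : T1 = \sum_j (nu j - 1) ^+ 2.
  rewrite /T1 exchange_big; apply: eq_bigr => j _ /=.
  have -> : (nu j - 1) ^+ 2 = s j * (1 - (nu j)^-1) ^+ 2.
    rewrite -nu_sqr; have := nu_pos j => h; field; exact: lt0r_neq0.
  rewrite /s mulr_suml; apply: eq_bigr => i _; case: ifP => _ //; by rewrite mul0r.
have -> : Off + ssq N = \sum_j (offc j + \sum_i N i j ^+ 2).
  rewrite big_split /= /Off /offc /ssq exchange_big /=; congr (_ + _).
  by rewrite exchange_big.
apply: ler_sum => j _.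
have h1 := colX j; have h2 := nu_sqr j; have h3 := nu_pos j.
have h4 : 0 <= offc j + \sum_i N i j ^+ 2.
  apply: addr_ge0; apply: sumr_ge0 => i _; last exact: sqr_ge0.
  by case: ifP => _ //; exact: sqr_ge0.
nra.
Qed.

Definition a j := \sum_l N l j.

Lemma a_ge0 j : 0 <= a j.
Proof. by apply: sumr_ge0 => l _; have [_ [_ []]] := PN l j. Qed.

Lemma Pbound i k : k != c i -> 9 * m * Pm i k <= 10 * (a (c i) + a k).
Proof.
move=> hk; have hx := Xpos (H1 hk).
have o := (stiefelE X).1 hX (c i) k.
rewrite eq_sym (negbTE hk) (bigD1 i) //= in o.
have hsum : - \sum_(l | l != i) X l (c i) * X l k <= a (c i) + a k.
  rewrite -sumrN; apply: le_trans (_ : _ <= \sum_(l | l != i) (N l (c i) + N l k)) _.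
    apply: ler_sum => l _; rewrite !NE; apply: neg_prod_le; exact: stiefel_bound.
  rewrite /a -big_split /= [X in _ <= X](bigD1 i) //= lerDr.
  by apply: addr_ge0; [have [_ [_ []]] := PN i (c i) | have [_ [_ []]] := PN i k].
have ha1 := a_ge0 (c i); have ha2 := a_ge0 k.
have [e1 [e2 [e3 e4]]] := PN i k.
have [P0|Ppos] := eqVneq (Pm i k) 0.
  by rewrite P0 mulr0; lra.
have N0 : N i k = 0 by move/eqP: e2; rewrite mulf_eq0 (negbTE Ppos) /= => /eqP.
rewrite N0 subr0 in e1.
have m0x := m0.
have hh : X i (c i) * X i k <= a (c i) + a k by lra.
rewrite e1 in hh.
have hq : 0 <= 10 * X i (c i) - 9 * m by lra.
have hpos := mulr_ge0 e3 hq.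
nra.
Qed.

Definition SA := \sum_j a j ^+ 2.

Lemma SA_le : SA <= n%:R * ssq N.
Proof.
rewrite /SA /ssq exchange_big /= mulr_sumr; apply: ler_sum => j _.
by have := qm_sum (fun l => N l j); rewrite card_ord.
Qed.

Lemma Off_le : 81 * m ^+ 2 * Off <= 200 * (n%:R ^+ 2 * (r%:R + 1)) * ssq N.
Proof.
apply: le_trans (_ : _ <= \sum_i \sum_k (200 * (a (c i) ^+ 2 + a k ^+ 2))) _.
  rewrite /Off -sum2Z; apply: sum2_ler => i k.
  case: ifP => hk; first by rewrite mulr0; apply: mulr_ge0 => //; apply: addr_ge0; exact: sqr_ge0.
  have hk' : k != c i by rewrite eq_sym hk.
  have hb := Pbound hk'.
  have [_ [_ [e3 _]]] := PN i k.
  have h0 : 0 <= 9 * m * Pm i k by apply: mulr_ge0 => //; apply: mulr_ge0 => //; exact: ltW m0.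
  have := alg_sq h0 hb.
  by have -> : (9 * m * Pm i k) ^+ 2 = 81 * m ^+ 2 * Pm i k ^+ 2 by ring.
apply: le_trans (_ : _ <= \sum_(i : 'I_n) \sum_(k : 'I_r) (200 * (SA + a k ^+ 2))) _.
  apply: sum2_ler => i k; rewrite ler_pM2l // lerD2r /SA (bigD1 (c i)) //= lerDl.
  by apply: sumr_ge0 => ? _; exact: sqr_ge0.
have -> : \sum_(i : 'I_n) \sum_(k : 'I_r) (200 * (SA + a k ^+ 2)) = 200 * (n%:R * (r%:R + 1)) * SA.
  under eq_bigr do rewrite -mulr_sumr big_split /= sumr_const card_ord.
  rewrite sumr_const card_ord /SA; ring.
have hn : 0 <= n%:R :> R by rewrite ler0n.
have hr : 0 <= r%:R :> R by rewrite ler0n.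
have h0 : 0 <= 200 * (n%:R * (r%:R + 1)) :> R by apply: mulr_ge0 => //; apply: mulr_ge0 => //; lra.
apply: le_trans (_ : _ <= 200 * (n%:R * (r%:R + 1)) * (n%:R * ssq N)) _.
  apply: ler_wpM2l => //. exact: SA_le.
by rewrite le_eqVlt; apply/orP; left; apply/eqP; ring.
Qed.

Lemma EB_main : exists Y, stiefel_nonneg Y /\
  m ^+ 2 * ssq (X - Y) <= (2 + 5 * (n%:R ^+ 2 * (r%:R + 1))) * ssq N.
Proof.
exists Ym; split; first exact: Y_S.
rewrite ssqXY.
have h1 := T1_le; have h2 := Off_le.
have hN := ssq_ge0 N.
have hO : 0 <= Off.
  by apply: sum2_ge0 => i j; case: ifP => _ //; exact: sqr_ge0.
have hn : 0 <= n%:R :> R by rewrite ler0n.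
have hr : 0 <= r%:R :> R by rewrite ler0n.
have hK : 0 <= n%:R ^+ 2 * (r%:R + 1) :> R by apply: mulr_ge0; [exact: sqr_ge0 | lra].
have m0x := m0; have m1x := m1.
have hm2 : m ^+ 2 <= 1 by rewrite expr2; apply: le_trans (ler_wpM2r (ltW m0x) m1x) _; rewrite mul1r.
apply: alg_final => //; first exact: sqr_ge0.
Qed.

End EB.

Lemma sq_le (R : realType) (a b : R) : 0 <= a -> a <= b -> a ^+ 2 <= b ^+ 2.
Proof. move=> h1 h2; have h3 : 0 <= b - a by lra. have h4 : 0 <= b + a by lra. have := mulr_ge0 h3 h4; nra. Qed.

Lemma sq_le_inv (R : realType) (a b : R) : 0 <= a -> 0 <= b -> a ^+ 2 <= b ^+ 2 -> a <= b.
Proof.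
move=> h1 h2 h3; rewrite leNgt; apply/negP => h4.
have h5 : 0 < a - b by lra.
have h6 : 0 < a + b by lra.
have := mulr_gt0 h5 h6; nra.
Qed.

Section Main.
Variables (R : realType) (n r : nat).
Local Notation M := 'M[R]_(n, r).
Implicit Types X Y Z W Xs : M.

Lemma LOC (f : M -> R) (glob : bool) Xs (dl L K d0 : R) :
  (r <= n)%N -> is_min glob (@stiefel_nonneg R n r) f Xs -> 0 < dl -> 0 <= L ->
  lip_cond f Xs dl L -> 0 <= K -> 0 < d0 ->
  (forall X, stiefel X -> fnorm (X - Xs) <= d0 -> mdist X (@stiefel_nonneg R n r) <= K * fnorm (negpart X)) ->
  exists2 d, 0 < d & forall X, stiefel X -> fnorm (X - Xs) <= d ->
    0 <= f X - f Xs + K ^+ 2 * L * fnorm (negpart X) ^+ 2.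
Proof.
move=> rn hmin dl0 L0 hlip K0 d00 heb.
have [hS [e e0 he]] : stiefel_nonneg Xs /\
    exists2 e : R, 0 < e & forall Y, stiefel_nonneg Y -> fnorm (Y - Xs) < e -> f Xs <= f Y.
  case: glob hmin => /= [[hS hg]|[hS [e e0 he]]]; split => //.
    by exists 1 => // Y hY _; apply: hg.
  by exists e.
have e3 : 0 < e / 3 by lra.
exists (Num.min (Num.min d0 dl) (e / 3)); first by rewrite !lt_min d00 dl0 e3.
move=> X hX; rewrite !le_min => /andP [/andP [hd1 hd2] hd3].
have [Xb hXb] := proj_exists X rn.
have hl := hlip X hX hd2 Xb hXb.
have h1 := le_trans (proj_le_mdist hXb) (heb X hX hd1).
have h2 : fnorm (X - Xb) ^+ 2 <= K ^+ 2 * fnorm (negpart X) ^+ 2.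
  by rewrite -exprMn; apply: sq_le => //; exact: fnorm_ge0.
have h3 : f Xs <= f Xb.
  apply: he; first exact: hXb.1.
  have t1 := fnorm_tri3 Xb X Xs.
  have t2 : fnorm (Xb - X) <= fnorm (X - Xs) by rewrite fnormB; apply: hXb.2; exact: hS.
  lra.
have hq : 0 <= K ^+ 2 * fnorm (negpart X) ^+ 2 - fnorm (X - Xb) ^+ 2 by lra.
have h4 := mulr_ge0 L0 hq; rewrite mulrBr in h4.
have e1 : K ^+ 2 * L * fnorm (negpart X) ^+ 2 = L * (K ^+ 2 * fnorm (negpart X) ^+ 2) by ring.
rewrite e1; lra.
Qed.

Lemma negpart_nonneg X : nonneg_mx (X + negpart X).
Proof.
move=> i j; rewrite !mxE.
have := le_max 0 0 (- X i j); have := le_max (- X i j) 0 (- X i j).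
rewrite lexx orbT /= => h1 _; lra.
Qed.

Lemma mdist_nonneg X : mdist X (@nonneg_mx R n r) <= fnorm (negpart X).
Proof.
apply: le_trans (mdist_le _ (negpart_nonneg X)) _.
by rewrite opprD addrA subrr sub0r fnormN.
Qed.

Lemma rows_c Xs : stiefel_nonneg Xs -> no_zero_rows Xs ->
  exists c : 'I_n -> 'I_r, (forall i j, Xs i j != 0 -> c i = j) /\ (forall i k, k != c i -> Xs i (c i) != 0).
Proof.
move=> [hN hS] hz; case: (choice hz) => c hc; exists c; split => //.
move=> i j hij; apply/eqP; apply: contraT => hne.
have o := (stiefelE Xs).1 hS (c i) j; rewrite (negbTE hne) in o.
have := @psumr_eq0P _ _ predT (fun l => Xs l (c i) * Xs l j) (fun l _ => mulr_ge0 (hN l (c i)) (hN l j)) o i erefl.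
by move/eqP; rewrite mulf_eq0 => /orP [] /eqP h; [move: (hc i) | move: hij]; rewrite h eqxx.
Qed.

Lemma square_nzr Xs : n = r -> stiefel Xs -> no_zero_rows Xs.
Proof.
move=> e; move: Xs; rewrite e => Xs hS i.
have h2 : Xs *m Xs^T = 1%:M by apply: mulmx1C.
have := congr1 (fun A : 'M[R]_r => A i i) h2; rewrite !mxE eqxx => hsum.
apply: contrapT => hn.
have : \sum_j Xs i j * Xs^T j i = 0.
  rewrite big1 // => j _; have : ~ (Xs i j != 0) by move=> h; apply: hn; exists j.
  by move/negP; rewrite negbK => /eqP ->; rewrite mul0r.
by rewrite hsum => /eqP; rewrite oner_eq0.
Qed.


Lemma pos_lb Xs : nonneg_mx Xs -> exists m : R, 0 < m /\ m <= 1 /\ forall i j, Xs i j != 0 -> m <= Xs i j.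
Proof.
move=> hN.
pose F i j := if Xs i j != 0 then Xs i j else 1.
have Fpos : forall i j, 0 < F i j.
  by move=> i j; rewrite /F; case: ifP => h //; rewrite lt_def h hN.
have Fi : forall p q, 0 <= (F p q)^-1 by move=> p q; rewrite invr_ge0; exact: ltW (Fpos p q).
have S0 : 0 <= \sum_i \sum_j (F i j)^-1 by apply: sum2_ge0.
set S := \sum_i \sum_j _ in S0.
have S1 : 0 < 1 + S by lra.
exists (1 + S)^-1; split; first by rewrite invr_gt0.
split; first by rewrite invf_le1 //; lra.
move=> i j hij.
have hF : F i j = Xs i j by rewrite /F hij.
rewrite -hF -(invrK (F i j)) lef_pV2 ?posrE ?invr_gt0 //.
have := @sum2_entry R n r (fun i j => (F i j)^-1) i j Fi.
rewrite -/S; lra.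
Qed.

Lemma EB_gen Xs (c : 'I_n -> 'I_r) (m K : R) :
  stiefel_nonneg Xs -> 0 < m -> m <= 1 ->
  (forall i j, Xs i j != 0 -> c i = j) ->
  (forall i j, Xs i j != 0 -> m <= Xs i j) ->
  (forall i k, k != c i -> Xs i (c i) != 0) ->
  0 <= K -> 2 + 5 * (n%:R ^+ 2 * (r%:R + 1)) <= (K * m) ^+ 2 ->
  forall X, stiefel X -> fnorm (X - Xs) <= m / 10 ->
  mdist X (@stiefel_nonneg R n r) <= K * fnorm (negpart X).
Proof.
move=> hS m0 m1 H2 H3 H1 K0 hK X hX hd.
have hd' : 10 * fnorm (X - Xs) <= m by rewrite -ler_pdivlMl //; rewrite mulrC.
have [Y [hY hin]] := EB_main hS m0 m1 H2 H3 H1 hX hd'.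
apply: le_trans (mdist_le _ hY) _.
apply: sq_le_inv; [exact: fnorm_ge0 | by apply: mulr_ge0 => //; exact: fnorm_ge0 |].
rewrite fnorm_sqr exprMn fnorm_sqr.
have hN := ssq_ge0 (negpart X).
have hm2 : 0 < m ^+ 2 by rewrite exprn_gt0.
rewrite -(ler_pM2l hm2).
apply: le_trans hin _.
have hC := ler_wpM2r hN hK.
apply: le_trans hC _.
by rewrite le_eqVlt; apply/orP; left; apply/eqP; ring.
Qed.

Lemma EB_K Xs : stiefel_nonneg Xs ->
  (exists c : 'I_n -> 'I_r, (forall i j, Xs i j != 0 -> c i = j) /\ (forall i k, k != c i -> Xs i (c i) != 0)) ->
  exists K d0 : R, 0 <= K /\ 0 < d0 /\ forall X, stiefel X -> fnorm (X - Xs) <= d0 ->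
    mdist X (@stiefel_nonneg R n r) <= K * fnorm (negpart X).
Proof.
move=> hS [c [H2 H1]].
have [m [m0 [m1 hm]]] := pos_lb hS.1.
set C := 2 + 5 * (n%:R ^+ 2 * (r%:R + 1)) : R.
have C0 : 0 <= C by rewrite /C; apply: addr_ge0 => //; apply: mulr_ge0 => //; apply: mulr_ge0; [exact: sqr_ge0| apply: addr_ge0; [exact: ler0n|]].
have K0 : 0 <= Num.sqrt C / m by apply: divr_ge0; [exact: sqrtr_ge0 | exact: ltW].
have hK : C <= (Num.sqrt C / m * m) ^+ 2.
  by rewrite divfK ?sqr_sqrtr //; exact: lt0r_neq0.
exists (Num.sqrt C / m), (m / 10); split => //; split; first by apply: divr_gt0.
exact: EB_gen hS m0 m1 H2 hm H1 K0 hK.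
Qed.

Lemma kappa_ineq (m : R) : (1 < r)%N -> (r < n)%N -> 0 < m ->
  2 + 5 * (n%:R ^+ 2 * (r%:R + 1)) <=
  ((21%:R / 10%:R) * Num.sqrt r%:R * (1 + 3%:R * (r * (n - r))%:R) / m * m) ^+ 2.
Proof.
move=> r1 rn m0.
rewrite divfK; last exact: lt0r_neq0.
rewrite !exprMn sqr_sqrtr ?ler0n //.
have hn : n = (r + (n - r))%N by rewrite subnKC // ltnW.
rewrite [in n%:R]hn natrD natrM.
set rr : R := r%:R; set ss : R := (n - r)%:R.
have hr : 2 <= rr by rewrite /rr (ler_nat R 2 r).
have hs : 1 <= ss by rewrite /ss (ler_nat R 1); rewrite subn_gt0.
set u := rr * ss.
have hu : rr + ss <= 2 * u by rewrite /u; nra.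
have hu2 : 2 <= u by rewrite /u; nra.
have h1 : (rr + ss) ^+ 2 <= 4 * u ^+ 2.
  have h0 : 0 <= rr + ss by lra.
  have := sq_le h0 hu; have -> : (2 * u) ^+ 2 = 4 * u ^+ 2 by ring.
  done.
have h2 : 0 <= u ^+ 2 by exact: sqr_ge0.
have h3 : (rr + ss) ^+ 2 * (rr + 1) <= 4 * u ^+ 2 * (3 / 2 * rr).
  apply: ler_pM; [exact: sqr_ge0 | lra | exact: h1 | lra].
have h4 : 9 * u ^+ 2 <= (1 + 3 * u) ^+ 2 by nra.
have h5 : 8 <= rr * u ^+ 2 by nra.
have e1 : (21%:R / 10%:R : R) ^+ 2 = 441 / 100.
  by rewrite expr_div_n; congr (_ / _); rewrite -natrX.
have h6 : 441 / 100 * rr * (9 * u ^+ 2) <= 441 / 100 * rr * (1 + 3 * u) ^+ 2.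
  apply: ler_wpM2l => //; apply: mulr_ge0; lra.
have e2 : (3%:R : R) = 3 by [].
rewrite -/u.
nra.
Qed.

End Main.

Section P3.
Variables (R : realType) (n r : nat).
Local Notation M := 'M[R]_(n, r).
Implicit Types X Y Z W Xs : M.

Lemma negpart_ent X i j : 0 <= negpart X i j /\ - X i j <= negpart X i j.
Proof. by rewrite mxE; split; rewrite le_max lexx ?orbT. Qed.

Lemma negpart0 X : nonneg_mx X -> fnorm (negpart X) = 0.
Proof.
move=> hX; rewrite /fnorm big1 ?sqrtr0 // => i _; rewrite big1 // => j _.
rewrite mxE; have := hX i j => h.
have -> : Num.max 0 (- X i j) = 0 by apply/max_idPl; rewrite oppr_le0.
by rewrite expr0n.
Qed.

Lemma h0_nonneg X : fnorm (negpart X) ^+ 2 <= 0 -> nonneg_mx X.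
Proof.
move=> h i j.
have hs : ssq (negpart X) = 0.
  by apply/eqP; rewrite eq_le -fnorm_sqr h /=; exact: sqr_ge0.
have := ssq0_entries hs i j; have [h1 h2] := negpart_ent X i j => e.
rewrite e in h2; lra.
Qed.

Lemma part3 (f : M -> R) (O : set M) : (r <= n)%N -> C1_on O f -> (@stiefel R n r) `<=` O ->
  (forall Xs, is_gmin (@stiefel_nonneg R n r) f Xs -> exists2 d : R, 0 < d & exists c0 : R, 0 <= c0 /\
     forall X, stiefel X -> fnorm (X - Xs) <= d -> 0 <= f X - f Xs + c0 * fnorm (negpart X) ^+ 2) ->
  exists2 rh : R, 0 < rh & forall rho : R, rh <= rho ->
     forall X, is_gmin (@stiefel R n r) (fun Y => f Y + rho * fnorm (negpart Y) ^+ 2) X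
               <-> is_gmin (@stiefel_nonneg R n r) f X.
Proof.
move=> rn hC1 hO hloc.
have hcont : contS (@stiefel_nonneg R n r) f.
  by move=> Y hY e e0; apply: (C1_cont hC1 (hO _ hY.2)).
have [X0 [hX0 hmin0]] := evt (stiefel_nonneg_ex R rn) hcont.
have hX0n := negpart0 hX0.1.
have key : exists rho', 0 <= rho' /\ forall Y, stiefel Y -> f X0 <= f Y + rho' * fnorm (negpart Y) ^+ 2.
  apply: contrapT => hn.
  have hkk : forall k : nat, exists Y, stiefel Y /\ f Y + k%:R * fnorm (negpart Y) ^+ 2 < f X0.
    move=> k; apply: contrapT => hk'; apply: hn; exists k%:R; split; first exact: ler0n.
    move=> Y hY; rewrite leNgt; apply/negP => hlt; apply: hk'; by exists Y.
  case: (choice hkk) => u hu.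
  have [Yb hYb] := cluster_fn (fun k => (hu k).1) (fun W hW i j => stiefel_bound i j hW).
  have YS := approx_stiefel (cluster_approx (fun k => (hu k).1) hYb).
  have [d1 d10 hd1] := C1_cont hC1 (hO _ YS) ltr01.
  have hhk : forall k, 0 <= fnorm (negpart (u k)) ^+ 2 by move=> k; exact: sqr_ge0.
  have YN : nonneg_mx Yb.
    move=> i j; rewrite leNgt; apply/negP => hneg.
    set t := - Yb i j.
    have t0 : 0 < t by rewrite /t oppr_gt0.
    set B := f X0 - f Yb + 1.
    have t2 : 0 < t ^+ 2 / 4 by apply: divr_gt0 => //; rewrite exprn_gt0.
    have hBp : 0 <= `|B| / (t ^+ 2 / 4) by apply: divr_ge0; [exact: normr_ge0 | exact: ltW].
    have hB := archi_boundP hBp.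
    have e2 : 0 < Num.min d1 (t / 2) by rewrite lt_min d10 /=; lra.
    have [k Nk hk] := hYb _ e2 (Num.Def.archi_bound (`|B| / (t ^+ 2 / 4))).
    move: hk; rewrite lt_min => /andP [hk1 hk2].
    have he := le_lt_trans (entry_le (u k - Yb) i j) hk2.
    rewrite !mxE in he; have /ltr_absP [he1 he2] := he.
    have [hn1 hn2] := negpart_ent (u k) i j.
    have hq : t / 2 <= negpart (u k) i j.
      move: he2 hn2; rewrite /t; lra.
    have t2h : 0 <= t / 2 by lra.
    have hq2 := sq_le t2h hq.
    have hq3 : negpart (u k) i j ^+ 2 <= fnorm (negpart (u k)) ^+ 2 by rewrite fnorm_sqr; exact: entry_sqr_le.
    have hkN : ((Num.Def.archi_bound (`|B| / (t ^+ 2 / 4)))%:R : R) <= k%:R by rewrite ler_nat.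
    have hkq : `|B| < k%:R * (t ^+ 2 / 4) by rewrite -ltr_pdivrMr //; lra.
    have hk0 : 0 <= (k%:R : R) by exact: ler0n.
    have hkh : k%:R * (t ^+ 2 / 4) <= k%:R * fnorm (negpart (u k)) ^+ 2.
      apply: ler_wpM2l => //; have -> : t ^+ 2 / 4 = (t / 2) ^+ 2 by field.
      exact: le_trans hq2 hq3.
    have /ltr_absP [hf1 hf2] := hd1 _ hk1.
    have hu2 := (hu k).2.
    have [_ hb1] := abs_bounds B.
    rewrite /B in hb1 hkq.
    lra.
  have YbS : stiefel_nonneg Yb by split.
  have hfY : f Yb <= f X0.
    apply/ler_addgt0Pr => e e0.
    have [d d0 hd] := C1_cont hC1 (hO _ YS) e0.
    have [k _ hk] := hYb _ d0 0%N.
    have /ltr_absP [hf1 hf2] := hd _ hk.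
    have hu2 := (hu k).2.
    have := mulr_ge0 (ler0n R k) (hhk k).
    lra.
  have hgY : is_gmin (@stiefel_nonneg R n r) f Yb.
    by split => // Z hZ; apply: le_trans hfY (hmin0 Z hZ).
  have [d d0 [c0 [c00 hc]]] := hloc Yb hgY.
  have hc0 := archi_boundP c00.
  have [k Nk hk] := hYb _ d0 (Num.Def.archi_bound c0).
  have hkN : ((Num.Def.archi_bound c0)%:R : R) <= k%:R by rewrite ler_nat.
  have hl := hc (u k) (hu k).1 (ltW hk).
  have hu2 := (hu k).2.
  have hX0Y := hmin0 Yb YbS.
  have hq : 0 <= k%:R - c0 by lra.
  have := mulr_ge0 hq (hhk k).
  nra.
have [rho' [rho0 hkey]] := key.
exists (rho' + 1); first lra.
move=> rho hrho X; split.
  move=> [hX hXmin].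
  have h1 := hXmin X0 hX0.2; rewrite hX0n expr0n /= mulr0 addr0 in h1.
  have h2 := hkey X hX.
  have hh := sqr_ge0 (fnorm (negpart X)).
  have hN : fnorm (negpart X) ^+ 2 <= 0.
    have hp : 0 <= (rho - rho') * fnorm (negpart X) ^+ 2 by apply: mulr_ge0 => //; lra.
    nra.
  have XN := h0_nonneg hN.
  have XS : stiefel_nonneg X by split.
  split => // Z hZ.
  rewrite (negpart0 XN) expr0n /= mulr0 addr0 in h1.
  exact: le_trans h1 (hmin0 Z hZ).
move=> [hXS hXmin]; split; first exact: hXS.2.
move=> Y hY /=; rewrite (negpart0 hXS.1) expr0n /= mulr0 addr0.
have h1 := hXmin X0 hX0.
have h2 := hkey Y hY.
have hh := sqr_ge0 (fnorm (negpart Y)).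
have hp : 0 <= (rho - rho') * fnorm (negpart Y) ^+ 2 by apply: mulr_ge0 => //; lra.
nra.
Qed.
End P3.

Unset Implicit Arguments.

Theorem corollary3p12 (R : realType) (n r : nat) (O : set 'M[R]_(n, r))
    (f : 'M[R]_(n, r) -> R) (glob : bool) :
  (1 <= r)%N -> (r <= n)%N ->
  open_fro O -> @stiefel R n r `<=` O -> C1_on O f ->
  ((1 < r)%N -> (r < n)%N ->
     forall X, is_min glob (@stiefel_nonneg R n r) f X -> no_zero_rows X) ->
  (forall Xs, is_min glob (@stiefel_nonneg R n r) f Xs ->
     exists dl L : R, 0 < dl /\ 0 < L /\ lip_cond f Xs dl L) ->
  (forall Xs, is_min glob (@stiefel_nonneg R n r) f Xs ->
   forall dl L : R, 0 < dl -> 0 < L -> lip_cond f Xs dl L ->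
     (((n == r) || ((r < n) && (r == 1)))%N ->
       forall kp : R, 0 < kp ->
       (forall Z, stiefel Z ->
          mdist Z (@stiefel_nonneg R n r) <= kp * mdist Z (@nonneg_mx R n r)) ->
       exists2 d : R, 0 < d & forall X, stiefel X -> fnorm (X - Xs) <= d ->
         0 <= f X - f Xs + kp ^+ 2 * L * fnorm (negpart X) ^+ 2)
     /\
     ((1 < r)%N -> (r < n)%N ->
       forall m : R, is_min_nz_entry Xs m ->
       let kappa := (21%:R / 10%:R) * Num.sqrt r%:R
                      * (1 + 3%:R * (r * (n - r))%:R) / m in
       exists2 d : R, 0 < d & forall eps : R, 0 <= eps ->
         forall X, level_set eps X -> fnorm (X - Xs) <= d ->
         0 <= f X - f Xs + kappa ^+ 2 * L * fnorm (negpart X) ^+ 2))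
  /\
  (glob = true ->
   exists2 rh : R, 0 < rh & forall rho : R, rh <= rho ->
     forall X, is_gmin (@stiefel R n r) (fun Y => f Y + rho * fnorm (negpart Y) ^+ 2) X
               <-> is_gmin (@stiefel_nonneg R n r) f X).
Proof.
move=> r1 rn hO hsub hC1 Hnz Hex.
have minS : forall Xs, is_min glob (@stiefel_nonneg R n r) f Xs -> stiefel_nonneg Xs.
  by case: glob {Hnz Hex} => Xs [].
split.
  move=> Xs hmin dl L dl0 L0 hlip; split.
    move=> _ kp kp0 hkp.
    apply: (LOC rn hmin dl0 (ltW L0) hlip (ltW kp0) ltr01) => X hX _.
    apply: le_trans (hkp X hX) _; apply: ler_wpM2l; [exact: ltW | exact: mdist_nonneg].
  move=> r1' rn' m hm kappa.
  have hnz := Hnz r1' rn' Xs hmin.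
  have hS := minS Xs hmin.
  have [c [H2 H1]] := rows_c hS hnz.
  case: hm => [[i0 [j0 e]] [mn0 hmm]].
  have m0 : 0 < m by rewrite lt_def mn0 -e; exact: hS.1.
  have m1 : m <= 1.
    by have /ler_absP [_ h] := stiefel_bound i0 j0 hS.2; rewrite -e.
  have K0 : 0 <= kappa.
    rewrite /kappa; apply: divr_ge0; last exact: ltW.
    apply: mulr_ge0; first by apply: mulr_ge0; [apply: divr_ge0; exact: ler0n | exact: sqrtr_ge0].
    by apply: addr_ge0 => //; apply: mulr_ge0; exact: ler0n.
  have hK := kappa_ineq r1' rn' m0.
  have m10 : 0 < m / 10 by apply: divr_gt0.
  have [d d0 hd] := LOC rn hmin dl0 (ltW L0) hlip K0 m10 (EB_gen hS m0 m1 H2 hmm H1 K0 hK).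
  exists d => // eps _ X [hX _] hXd; exact: hd X hX hXd.
move=> hg; subst glob.
apply: (part3 rn hC1 hsub) => Xs hgmin.
have hmin : is_min true (@stiefel_nonneg R n r) f Xs := hgmin.
have hS := hgmin.1.
have [dl [L [dl0 [L0 hlip]]]] := Hex Xs hmin.
have hc : exists c : 'I_n -> 'I_r, (forall i j, Xs i j != 0 -> c i = j) /\
    (forall i k, k != c i -> Xs i (c i) != 0).
  have [r1e|r1n] := eqVneq r 1%N.
    have all1 : forall j k : 'I_r, j = k.
      move=> j k; apply: val_inj.
      have hj : (val j < 1)%N by rewrite -r1e; exact: ltn_ord.
      have hk : (val k < 1)%N by rewrite -r1e; exact: ltn_ord.
      by move: hj hk; rewrite !ltnS !leqn0 => /eqP -> /eqP ->.
    exists (fun _ => Ordinal r1); split; first by move=> i j _; exact: all1.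
    by move=> i k; rewrite (all1 k (Ordinal r1)) eqxx.
  have r1' : (1 < r)%N by rewrite ltn_neqAle eq_sym r1n r1.
  apply: rows_c => //.
  have [nr|nr] := eqVneq n r; first exact: square_nzr nr hS.2.
  have rn2 : (r < n)%N by rewrite ltn_neqAle eq_sym nr rn.
  exact: Hnz r1' rn2 Xs hmin.
have [K [d0 [K0 [d00 heb]]]] := EB_K hS hc.
have [d d0' hd] := LOC rn hmin dl0 (ltW L0) hlip K0 d00 heb.
exists d => //; exists (K ^+ 2 * L); split; last exact: hd.
by apply: mulr_ge0; [exact: sqr_ge0 | exact: ltW].
Qed.
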